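(* Let $\mathbb{H}$ be a quasiconcave classical entropy and let $\mathcal{N}$ be a classical channel from $X$ ($|X|=m$) to $Y$ with columns $\mathbf{p}_x=\mathcal{N}(\mathbf{e}_x)$. Then its maximal extension satisfies $\overline{\mathbb{H}}(Y|X)_{\mathcal{N}}=\min_{x\in[m]}\mathbb{H}(\mathbf{p}_x)$.
   Context: A classical entropy is a function $\mathbb{H}$ on $\bigcup_{n}\mathrm{Prob}(n)$ that is Schur-concave ($\mathbf{p}\succ\mathbf{q}\Rightarrow\mathbb{H}(\mathbf{p})\le\mathbb{H}(\mathbf{q})$, vectors of different lengths being compared after padding with zeros) and additive ($\mathbb{H}(\mathbf{p}\otimes\mathbf{q})=\mathbb{H}(\mathbf{p})+\mathbb{H}(\mathbf{q})$). It is quasiconcave if $\mathbb{H}(\sum_i\lambda_i\mathbf{p}_i)\ge\min_i\mathbb{H}(\mathbf{p}_i)$ for convex weights $\lambda_i$. Here $\mathbf{p}\succ\mathbf{q}$ means the sum of the $k$ largest entries of $\mathbf{p}$ is at least that of $\mathbf{q}$ for every $k$. Classical channels are column-stochastic matrices; a probability vector is a classical channel with trivial input. Classical channel majorization (same output): $\mathcal{N}\succ\mathcal{M}$ iff $\mathcal{M}=\mathcal{D}^{YZ\to Y}\circ(\mathcal{N}\otimes\mathrm{id}^Z)\circ\mathcal{S}^{X'\to XZ}$ for a finite classical system $Z$ and classical channels $\mathcal{S},\mathcal{D}$ with $\mathcal{D}(\cdot\otimes\mathbf{e}_z)$ doubly stochastic for all $z$; channels with different output sizes are compared after padding outputs of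 the smaller one with zeros. The maximal extension is $\overline{\mathbb{H}}(Y|X)_{\mathcal{N}}:=\inf\{\mathbb{H}(\mathbf{q}):\ \mathcal{N}\succ\mathbf{q}\}$, the infimum over probability vectors $\mathbf{q}$ of arbitrary finite length. *)

(* Defs.v *)
From HB Require Import structures.
From mathcomp Require Import all_boot all_order all_algebra.
From mathcomp Require Import mxtens.
From mathcomp Require Import boolp classical_sets reals.
Set Implicit Arguments. Unset Strict Implicit. Unset Printing Implicit Defensive.
Import Order.TTheory GRing.Theory Num.Theory.
Local Open Scope ring_scope.
Local Open Scope classical_set_scope.

Section Defs.
Variable R : realType.

(* A classical channel from 'I_b to 'I_a is a column-stochastic a x b matrix;
   column j is the output distribution on input e_j. *)
Definition is_channel {a b : nat} (A : 'M[R]_(a, b)) : Prop :=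
  (forall i j, 0 <= A i j) /\ (forall j, \sum_i A i j = 1).

(* A probability vector of length n = a channel with trivial input. *)
Definition is_prob {n : nat} (p : 'cV[R]_n) : Prop := is_channel p.

Definition doubly_stochastic {a b : nat} (A : 'M[R]_(a, b)) : Prop :=
  is_channel A /\ (forall i, \sum_j A i j = 1).

Definition pad {a b : nat} (k : nat) (A : 'M[R]_(a, b)) : 'M[R]_(k, b) :=
  \matrix_(i < k, j < b)
    (if (insub (val i) : option 'I_a) is Some i' then A i' j else 0).

Definition sum_largest {N : nat} (v : 'cV[R]_N) (j : nat) : R :=
  \big[Num.max/0]_(A : {set 'I_N} | #|A| == j) \sum_(i in A) v i 0.

Definition majorizes {n k : nat} (p : 'cV[R]_n) (q : 'cV[R]_k) : Prop :=
  forall j, (j <= maxn n k)%N ->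
    sum_largest (pad (maxn n k) q) j <= sum_largest (pad (maxn n k) p) j.

Definition chmaj_same {y x x' : nat} (N : 'M[R]_(y, x)) (M : 'M[R]_(y, x'))
  : Prop :=
  exists (nz : nat) (S : 'M[R]_(x * nz, x')) (D : 'M[R]_(y, y * nz)),
    is_channel S /\ is_channel D /\
    (forall z : 'I_nz,
        doubly_stochastic (D *m ((1%:M : 'M[R]_y) *t (delta_mx z 0 : 'cV[R]_nz)))) /\
    M = D *m (N *t (1%:M : 'M[R]_nz)) *m S.

Definition chmaj {a x b x' : nat} (N : 'M[R]_(a, x)) (M : 'M[R]_(b, x')) : Prop :=
  chmaj_same (pad (maxn a b) N) (pad (maxn a b) M).

Definition entropy_fun := forall n : nat, 'cV[R]_n -> R.

Definition schur_concave (H : entropy_fun) : Prop :=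
  forall n k (p : 'cV[R]_n) (q : 'cV[R]_k),
    is_prob p -> is_prob q -> majorizes p q -> H n p <= H k q.

Definition additive (H : entropy_fun) : Prop :=
  forall n k (p : 'cV[R]_n) (q : 'cV[R]_k),
    is_prob p -> is_prob q -> H (n * k)%N (p *t q) = H n p + H k q.

Definition classical_entropy (H : entropy_fun) : Prop :=
  schur_concave H /\ additive H.

Definition quasiconcave (H : entropy_fun) : Prop :=
  forall n r (lam : 'I_r.+1 -> R) (ps : 'I_r.+1 -> 'cV[R]_n),
    (forall i, 0 <= lam i) -> \sum_i lam i = 1 -> (forall i, is_prob (ps i)) ->
    \big[Num.min/H n (ps ord0)]_(i < r.+1) H n (ps i)
      <= H n (\sum_i lam i *: ps i).

Definition max_ext (H : entropy_fun) {y x : nat} (N : 'M[R]_(y, x)) : R :=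
  inf [set t : R | exists (k : nat) (q : 'cV[R]_k),
                     is_prob q /\ chmaj N q /\ t = H k q].

End Defs.

(* Main.v *)
Require Import Defs.
From HB Require Import structures.
From mathcomp Require Import all_boot all_order all_algebra.
From mathcomp Require Import mxtens.
From mathcomp Require Import boolp classical_sets reals.
From mathcomp Require Import ring lra.
Import Order.TTheory GRing.Theory Num.Theory.
Local Open Scope ring_scope.
Set Implicit Arguments. Unset Strict Implicit.

Section H.
Variable R : realType.

Definition idm (a b : nat) : 'M[R]_(a, b) := \matrix_(i, j) ((val i == val j)%:R).

Lemma sum_ind (b n : nat) : \sum_(j < b) ((n == val j)%:R : R) = (n < b)%:R.
Proof.
case: (ltnP n b) => hn.
  rewrite (bigD1 (Ordinal hn)) //= eqxx big1 ?addr0 // => j hj.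
  by rewrite eq_sym; case: eqP => // e; move: hj; rewrite -(inj_eq val_inj) /= e eqxx.
rewrite big1 // => j _; case: eqP => // e.
by move: (ltn_ord j); rewrite -e ltnNge hn.
Qed.

Lemma padE a n m (c : 'M[R]_(n, m)) (r : 'I_a) j (h : (val r < n)%N) :
  pad a c r j = c (Ordinal h) j.
Proof. by rewrite mxE insubT. Qed.

Lemma padE0 a n m (c : 'M[R]_(n, m)) (r : 'I_a) j : ~~ (val r < n)%N ->
  pad a c r j = 0.
Proof. by move=> h; rewrite mxE insubF //; apply/negbTE. Qed.

Lemma pad_idm a n m (c : 'M[R]_(n, m)) : pad a c = idm a n *m c.
Proof.
apply/matrixP => r j; rewrite mxE [RHS]mxE.
case: (ltnP (val r) n) => h.
  rewrite insubT (bigD1 (Ordinal h)) //= mxE eqxx mul1r big1 ?addr0 // => l hl.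
  rewrite mxE; case: eqP => e; last by rewrite mul0r.
  by move: hl; rewrite -(inj_eq val_inj) /= e eqxx.
rewrite insubF; last by apply/negbTE; rewrite -leqNgt.
rewrite big1 // => l _; rewrite mxE; case: eqP => e; last by rewrite mul0r.
by move: (ltn_ord l); rewrite -e ltnNge h.
Qed.


Definition substoch {a b} (W : 'M[R]_(a, b)) :=
  (forall i j, 0 <= W i j) /\ (forall i, \sum_j W i j <= 1) /\ (forall j, \sum_i W i j <= 1).

Definition sub_rel {a b} (u : 'cV[R]_a) (v : 'cV[R]_b) :=
  exists W : 'M[R]_(a, b), substoch W /\ u = W *m v.

Lemma substoch_idm a b : substoch (idm a b).
Proof.
split; [|split].
- by move=> i j; rewrite mxE ler0n.
- move=> i; under eq_bigr do rewrite mxE.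
  by rewrite sum_ind; case: ltnP.
- move=> j; under eq_bigr do rewrite mxE eq_sym.
  by rewrite sum_ind; case: ltnP.
Qed.

Lemma substoch_mul a b c (A : 'M[R]_(a, b)) (B : 'M[R]_(b, c)) :
  substoch A -> substoch B -> substoch (A *m B).
Proof.
move=> [A0 [Ar Ac]] [B0 [Br Bc]]; split; [|split].
- by move=> i j; rewrite mxE sumr_ge0 // => k _; rewrite mulr_ge0.
- move=> i; under eq_bigr do rewrite mxE.
  rewrite exchange_big /=; under eq_bigr do rewrite -mulr_sumr.
  apply: le_trans (Ar i); apply: ler_sum => k _; exact: ler_piMr.
- move=> j; under eq_bigr do rewrite mxE.
  rewrite exchange_big /=; under eq_bigr do rewrite -mulr_suml.
  apply: le_trans (Bc j); apply: ler_sum => k _; rewrite mulrC; exact: ler_piMr.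
Qed.

Lemma sub_rel_trans a b c (u : 'cV[R]_a) (v : 'cV[R]_b) (w : 'cV[R]_c) :
  sub_rel u v -> sub_rel v w -> sub_rel u w.
Proof.
move=> [W1 [h1 ->]] [W2 [h2 ->]]; exists (W1 *m W2); split.
  exact: substoch_mul.
by rewrite mulmxA.
Qed.

Lemma sub_rel_pad a b (v : 'cV[R]_b) : sub_rel (pad a v) v.
Proof. by exists (idm a b); split; [exact: substoch_idm| exact: pad_idm]. Qed.

Lemma sub_rel_unpad a b (v : 'cV[R]_b) : (b <= a)%N -> sub_rel v (pad a v).
Proof.
move=> hba; exists (idm b a); split; first exact: substoch_idm.
rewrite -pad_idm; apply/matrixP => r j.
have hr : (val r < a)%N by apply: leq_trans (ltn_ord r) hba.
have hr2 : (val (Ordinal hr) < b)%N := ltn_ord r.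
rewrite (padE _ _ hr) (padE _ _ hr2); congr (v _ _); exact: val_inj.
Qed.

Lemma is_channel_mul a b c (A : 'M[R]_(a, b)) (B : 'M[R]_(b, c)) :
  is_channel A -> is_channel B -> is_channel (A *m B).
Proof.
move=> [A0 Ac] [B0 Bc]; split.
- by move=> i j; rewrite mxE sumr_ge0 // => k _; rewrite mulr_ge0.
- move=> j; under eq_bigr do rewrite mxE.
  rewrite exchange_big /=; under eq_bigr do rewrite -mulr_suml.
  rewrite -(Bc j); apply: eq_bigr => k _; by rewrite Ac mul1r.
Qed.

Lemma is_channel_idm a b : (b <= a)%N -> is_channel (idm a b).
Proof.
move=> hba; split; first by move=> i j; rewrite mxE ler0n.
move=> j; under eq_bigr do rewrite mxE eq_sym.
by rewrite sum_ind (leq_trans (ltn_ord j) hba).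
Qed.

Lemma is_prob_pad a b (v : 'cV[R]_b) : (b <= a)%N -> is_prob v -> is_prob (pad a v).
Proof. by move=> hba hv; rewrite pad_idm; apply: is_channel_mul => //; exact: is_channel_idm. Qed.

Lemma ds_substoch a b (D : 'M[R]_(a, b)) : doubly_stochastic D -> substoch D.
Proof. by move=> [[D0 Dc] Dr]; split => //; split => i; rewrite ?Dr ?Dc. Qed.


Lemma sl_ge0 K (v : 'cV[R]_K) j : 0 <= sum_largest v j.
Proof. by rewrite /sum_largest; elim/big_rec: _ => // i x _ h; rewrite le_max h orbT. Qed.

Lemma sl_ge K (v : 'cV[R]_K) j (B : {set 'I_K}) :
  #|B| = j -> \sum_(i in B) v i 0 <= sum_largest v j.
Proof. by move=> hB; rewrite /sum_largest; apply: (le_bigmax_cond _ (j:=B)); apply/eqP. Qed.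

Lemma L1 K (v : 'cV[R]_K) (c : 'I_K -> R) j (B0 : {set 'I_K}) :
  #|B0| = j -> (forall l, 0 <= v l 0) -> (forall l, 0 <= c l) -> (forall l, c l <= 1) ->
  \sum_l c l <= j%:R -> \sum_l c l * v l 0 <= sum_largest v j.
Proof.
move=> hB0 v0 c0 c1 csum.
set F := fun A : {set 'I_K} => \sum_(i in A) v i 0.
case: (@arg_maxP _ _ _ B0 (fun A : {set 'I_K} => #|A| == j) F); first by apply/eqP.
move=> B /eqP hB hmax.
apply: le_trans (sl_ge v hB).
have sw : forall a b, a \in B -> b \notin B -> v b 0 <= v a 0.
  move=> a b ha hb.
  have hc : #|b |: (B :\ a)| == j.
    rewrite cardsU1 in_setD1 (negbTE hb) andbF /= -hB (cardsD1 a B) ha.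
    by rewrite add1n.
  have := hmax _ hc; rewrite /F big_setU1 /=; last by rewrite in_setD1 (negbTE hb) andbF.
  by rewrite [X in _ <= X](big_setD1 _ ha) /= lerD2r.
set X := \sum_(l | l \notin B) c l * v l 0.
set Y := \sum_(a in B) (1 - c a) * v a 0.
set al := \sum_(l | l \notin B) c l.
set be := \sum_(a in B) (1 - c a).
have E1 : \sum_l c l * v l 0 = \sum_(a in B) c a * v a 0 + X.
  by rewrite (bigID (mem B)) /=.
have E2 : F B = \sum_(a in B) c a * v a 0 + Y.
  rewrite /Y /F -big_split /=; apply: eq_bigr => a _; ring.
have E3 : \sum_l c l = \sum_(a in B) c a + al.
  by rewrite (bigID (mem B)) /=.
have E4 : be = j%:R - \sum_(a in B) c a.
  by rewrite /be sumrB sumr_const hB.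
have Y0 : 0 <= Y by apply: sumr_ge0 => a _; apply: mulr_ge0 => //; rewrite subr_ge0.
have X0 : 0 <= X by apply: sumr_ge0 => a _; apply: mulr_ge0.
have al0 : 0 <= al by apply: sumr_ge0.
have be0 : 0 <= be by apply: sumr_ge0 => a _; rewrite subr_ge0.
have alb : al <= be.
  rewrite E4; move: csum; rewrite E3; rewrite lerBrDl addrC; done.
have key : X * be <= al * Y.
  rewrite /X /be /al /Y mulr_suml mulr_suml; apply: ler_sum => l hl.
  rewrite !mulr_sumr; apply: ler_sum => a ha.
  rewrite -mulrA [v l 0 * _]mulrC mulrA [X in _ <= X]mulrA; apply: ler_wpM2l; last exact: sw.
  by rewrite mulr_ge0 // subr_ge0.
change (\sum_l c l * v l 0 <= F B); rewrite E1 E2 lerD2l.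
have [bpos|] := ltP 0 be.
  by rewrite -(ler_pM2r bpos); nra.
move=> ble; have be00 : be = 0 by apply/eqP; rewrite eq_le ble be0.
have al00 : al = 0 by apply/eqP; rewrite eq_le al0 -be00 alb.
have cz := psumr_eq0P (fun l _ => c0 l) al00.
by rewrite /X big1 // => l hl; rewrite cz // mul0r.
Qed.

Lemma MAJ0 K (W : 'M[R]_(K, K)) (v : 'cV[R]_K) j :
  substoch W -> (forall l, 0 <= v l 0) -> sum_largest (W *m v) j <= sum_largest v j.
Proof.
move=> [W0 [Wr Wc]] v0; rewrite {1}/sum_largest; apply: bigmax_le; first exact: sl_ge0.
move=> B /eqP hB.
under eq_bigr do rewrite mxE.
rewrite exchange_big /=; under eq_bigr do rewrite -mulr_suml.
apply: (L1 (c := fun l => \sum_(i in B) W i l) hB) => //.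
- by move=> l; apply: sumr_ge0.
- move=> l; apply: le_trans (Wc l).
  by rewrite [X in _ <= X](bigID (mem B)) /= lerDl sumr_ge0.
- rewrite exchange_big /=; apply: le_trans (_ : \sum_(i in B) (1 : R) <= _).
    by apply: ler_sum => i _; exact: Wr.
  by rewrite sumr_const hB.
Qed.


Lemma pad_ge0 a n (p : 'cV[R]_n) : is_prob p -> forall l, 0 <= pad a p l 0.
Proof. by move=> [p0 _] l; rewrite mxE; case: insub => // ?; exact: p0. Qed.

Lemma maj_of_sub n k (p : 'cV[R]_n) (q : 'cV[R]_k) :
  is_prob p -> sub_rel q p -> majorizes p q.
Proof.
move=> hp hs j _.
have h1 : sub_rel (pad (maxn n k) q) (pad (maxn n k) p).
  apply: sub_rel_trans (sub_rel_pad _ _) _.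
  apply: sub_rel_trans hs _; apply: sub_rel_unpad; exact: leq_maxl.
case: h1 => W [hW ->]; apply: MAJ0 => //; exact: pad_ge0.
Qed.

Lemma schur_sub (H : entropy_fun R) (hS : schur_concave H) n k (p : 'cV[R]_n) (q : 'cV[R]_k) :
  is_prob p -> is_prob q -> sub_rel q p -> H n p <= H k q.
Proof. by move=> hp hq hs; apply: hS => //; apply: maj_of_sub. Qed.

Lemma col_tens m n p q (A : 'M[R]_(m, n)) (B : 'M[R]_(p, q)) x z :
  col (mxtens_index (x, z)) (A *t B) = col x A *t col z B.
Proof. by apply/matrixP => r j; rewrite !mxE mxtens_indexK. Qed.

Lemma tens1_pad a (c : 'cV[R]_a) : c *t (1%:M : 'M[R]_1) = pad (a * 1) c.
Proof.
apply/matrixP => r j; rewrite mxE [RHS]mxE.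
have e : val (mxtens_unindex r).1 = val r by rewrite /= divn1.
have hr : (val r < a)%N by rewrite -e ltn_ord.
rewrite insubT /= !mxE.
set o1 := Ordinal (mxtens_index_proof2 r); set o2 := Ordinal (mxtens_index_proof2 j).
rewrite [o1]ord1 [o2]ord1 eqxx mulr1; congr (c _ _); apply: val_inj => /=; by rewrite divn1.
Qed.

Lemma col_pad a n m (N : 'M[R]_(n, m)) x : col x (pad a N) = pad a (col x N).
Proof. by apply/matrixP => r j; rewrite !mxE; case: insub => // ?; rewrite mxE. Qed.

Lemma mulmx_col a b (A : 'M[R]_(a, b)) (s : 'cV[R]_b) :
  A *m s = \sum_i s i 0 *: col i A.
Proof.
apply/matrixP => r j; rewrite mxE summxE [j]ord1; apply: eq_bigr => i _.
by rewrite !mxE mulrC.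
Qed.

Lemma is_prob_col a b (A : 'M[R]_(a, b)) x : is_channel A -> is_prob (col x A).
Proof. by move=> [A0 Ac]; split => [i j|j]; rewrite ?mxE //; under eq_bigr do rewrite mxE. Qed.

Lemma is_channel_tens m n p q (A : 'M[R]_(m, n)) (B : 'M[R]_(p, q)) :
  is_channel A -> is_channel B -> is_channel (A *t B).
Proof.
move=> [A0 Ac] [B0 Bc]; split.
  by move=> i j; rewrite mxE mulr_ge0.
move=> j; under eq_bigr do rewrite mxE.
by rewrite -(mulr_sum (fun i => A i _) (fun i => B i _)) Ac Bc mulr1.
Qed.


Lemma pad_pad a b n m (c : 'M[R]_(n, m)) : (n <= b)%N -> pad a (pad b c) = pad a c.
Proof.
move=> hnb; apply/matrixP => r j; rewrite mxE [RHS]mxE.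
case: (ltnP (val r) b) => hb.
  by rewrite insubT /= mxE.
rewrite insubF; last by apply/negbTE; rewrite -leqNgt.
rewrite insubF //; apply/negbTE; rewrite -leqNgt; exact: leq_trans hnb hb.
Qed.

Lemma QC (H : entropy_fun R) (hq : quasiconcave H) n p (lam : 'I_p -> R)
  (ps : 'I_p -> 'cV[R]_n) a : (0 < p)%N -> (forall i, 0 <= lam i) -> \sum_i lam i = 1 ->
  (forall i, is_prob (ps i)) -> (forall i, a <= H n (ps i)) -> a <= H n (\sum_i lam i *: ps i).
Proof.
case: p lam ps => // r lam ps _ l0 l1 pp ha.
apply: le_trans (hq _ _ lam ps l0 l1 pp); exact: le_bigmin.
Qed.

Lemma lower (H : entropy_fun R) (hH : classical_entropy H) (hq : quasiconcave H)
  m ny (N : 'M[R]_(ny, m.+1)) (hN : is_channel N) k (q : 'cV[R]_k) :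
  is_prob q -> chmaj N q ->
  \big[Num.min/H ny (col ord0 N)]_(x < m.+1) H ny (col x N) <= H k q.
Proof.
move=> hq0 [nz [S [D [hS [hD [hDz heq]]]]]].
have hkM : (k <= maxn ny k)%N := leq_maxr _ _.
have hnM : (ny <= maxn ny k)%N := leq_maxl _ _.
apply: le_trans (_ : _ <= H (maxn ny k) (pad (maxn ny k) q)) _; last first.
  apply: (schur_sub hH.1); [exact: is_prob_pad | done | exact: sub_rel_unpad].
rewrite heq mulmx_col.
case: nz S D hS hD hDz heq => [|nz] S D hS hD hDz heq.
  have := hS.2 ord0; rewrite big1 => [/eqP|i]; first by rewrite eq_sym oner_eq0.
  by case: i => i hi; exfalso; move: hi; rewrite muln0.
have claim : forall i, exists x z, col i (D *m (pad (maxn ny k) N *t 1%:M)) =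
   (D *m ((1%:M : 'M[R]_(maxn ny k)) *t (delta_mx z 0 : 'cV[R]_nz.+1))) *m
     (pad (maxn ny k) (col x N) *t (1%:M : 'M[R]_1)).
  move=> i; case: (mxtens_indexP i) => x z; exists x, z.
  rewrite colE -mulmxA -colE col_tens col1 col_pad -mulmxA tensmx_mul mul1mx mulmx1.
  by [].
apply: QC => //.
- by move=> i; exact: hS.1.
- exact: hS.2.
- move=> i; have [x [z ->]] := claim i.
  apply: is_channel_mul; first exact: (hDz z).1.
  rewrite tens1_pad; apply: is_prob_pad; first by rewrite muln1.
  by apply: is_prob_pad => //; exact: is_prob_col.
- move=> i; have [x [z ->]] := claim i.
  apply: le_trans (bigmin_le _ x _) _.
  apply: (schur_sub hH.1); first exact: is_prob_col.
    apply: is_channel_mul; first exact: (hDz z).1.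
    rewrite tens1_pad; apply: is_prob_pad; first by rewrite muln1.
    by apply: is_prob_pad => //; exact: is_prob_col.
  rewrite tens1_pad.
  apply: (sub_rel_trans (v := pad (maxn ny k * 1) (pad (maxn ny k) (col x N)))).
    by eexists; split; [exact: ds_substoch (hDz z)| reflexivity].
  apply: sub_rel_trans (sub_rel_pad _ _) _; exact: sub_rel_pad.
Qed.

Lemma col_chmaj ny m (N : 'M[R]_(ny, m.+1)) x : chmaj N (col x N).
Proof.
rewrite /chmaj /chmaj_same.
exists 1%N, ((delta_mx x 0 : 'cV[R]_m.+1) *t (1%:M : 'M[R]_1)),
  (idm (maxn ny ny) (maxn ny ny * 1)).
split; [|split; [|split]].
- have hd : is_channel (delta_mx x 0 : 'cV[R]_m.+1).
    split => [i j|j]; first by rewrite mxE ler0n.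
    rewrite [j]ord1 (bigD1 x) //= mxE !eqxx big1 ?addr0 // => i hi.
    by rewrite mxE (negbTE hi).
  have h1 : is_channel (1%:M : 'M[R]_1).
    split => [i j|j]; first by rewrite mxE ler0n.
    by rewrite big_ord1 [j]ord1 mxE.
  exact: (is_channel_tens hd h1).
- by apply: is_channel_idm; rewrite muln1.
- move=> z.
  have -> : (1%:M : 'M[R]_(maxn ny ny)) *t (delta_mx z 0 : 'cV[R]_1) = 1%:M.
    apply/matrixP => r s; case: (mxtens_indexP r) => r1 r2; case: (mxtens_indexP s) => s1 s2.
    rewrite tensmxE !mxE [r2]ord1 [s2]ord1 [z]ord1 !eqxx mulr1.
    by rewrite (can_eq (@mxtens_indexK _ _)) xpair_eqE eqxx andbT.
  rewrite mulmx1; split; first by apply: is_channel_idm; rewrite muln1.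
  move=> i; under eq_bigr do rewrite mxE.
  by rewrite sum_ind muln1 ltn_ord.
- have e : pad (maxn ny ny) N *t (1%:M : 'M[R]_1) *m (delta_mx x 0 *t (1%:M : 'M[R]_1))
      = pad (maxn ny ny) (col x N) *t (1%:M : 'M[R]_1).
    by rewrite tensmx_mul mulmx1 -colE col_pad.
  rewrite -mulmxA e tens1_pad -pad_idm.
  rewrite pad_pad ?muln1 // pad_pad //; exact: leq_maxl.
Qed.

End H.

Unset Implicit Arguments.
Set Strict Implicit.

Theorem theorem19 (R : realType) (H : entropy_fun R)
  (hH : classical_entropy H) (hq : quasiconcave H)
  (m ny : nat) (N : 'M[R]_(ny, m.+1)) (hN : is_channel N) :
  max_ext H N = \big[Num.min/H ny (col ord0 N)]_(x < m.+1) H ny (col x N).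
Proof.
rewrite /max_ext.
set a := \big[Num.min/_]_(x < m.+1) _.
set S := (X in inf X).
have lb : forall t, S t -> a <= t.
  by move=> t [k [q [hq0 [hc ->]]]]; exact: lower.
have mem : forall x, S (H ny (col x N)).
  move=> x; exists ny, (col x N); split; first exact: is_prob_col.
  by split; [exact: col_chmaj | ].
apply/eqP; rewrite eq_le; apply/andP; split.
  apply: le_bigmin => [|x _]; apply: ge_inf; try exact: mem.
    by exists a => t; exact: lb.
  by exists a => t; exact: lb.
apply: lb_le_inf; first by exists (H ny (col ord0 N)); exact: mem.
by move=> t; exact: lb.
Qed.
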